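(* If a set $S$ of sentences has a model, then there exists an alphabet that includes the original alphabet and an interpretation based on the expanded alphabet which is a separating model for $S$ (with respect to the expanded alphabet).
   Context: Setting: higher-order logic (Church's simple theory of types, without a description operator), with Henkin semantics: an interpretation $I$ for an alphabet consists of domains $D_\alpha$ for each type ($D_o=\{\mathsf T,\mathsf F\}$, $D_{\alpha\to\beta}$ a set of functions $D_\alpha\to D_\beta$) and a valuation of the constants of the alphabet (equality denoting identity) such that every term has a denotation; $V(t,I)$ is the denotation of a closed term $t$. Sentences are closed terms of type $o$; a model for a set of sentences is an interpretation in which each of them is true. An interpretation $I$ for an alphabet is separating if for every pair $r,s$ of closed terms of the same function type $\alpha\to\beta$ with $V(r,I)\neq V(s,I)$ there is a closed term $t$ of type $\alpha$ formed from symbols of that alphabet with $V((r\,t),I)\neq V((s\,t),I)$; a separating model is a separating interpretation that is a model. *)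

(* Defs.v *)
(* a deep embedding of Church's simple type theory
   (without description) with Henkin semantics. *)
From Stdlib Require Import List.
Import ListNotations.
Set Implicit Arguments.

(** Types: o (truth values), base types (indexed by nat, e.g. iota = Tb 0), arrows. *)
Inductive ty : Type :=
| To : ty
| Tb : nat -> ty
| Tarr : ty -> ty -> ty.

Inductive logc : Type :=
| LEq : ty -> logc
| LNeg : logc
| LOr : logc
| LPi : ty -> logc.

Definition ltype (l : logc) : ty :=
  match l with
  | LEq a => Tarr a (Tarr a To)
  | LNeg => Tarr To To
  | LOr => Tarr To (Tarr To To)
  | LPi a => Tarr (Tarr a To) To
  end.

Record alphabet : Type := Alphabet { sym : Type; styp : sym -> ty }.

Definition ext_alphabet (A : alphabet) (N : Type) (sigN : N -> ty) : alphabet :=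
  {| sym := (sym A + N)%type;
     styp := fun x => match x with inl c => styp A c | inr n => sigN n end |}.

Inductive var : list ty -> ty -> Type :=
| VZ : forall a G, var (a :: G) a
| VS : forall a b G, var G a -> var (b :: G) a.

Inductive tm (A : alphabet) : list ty -> ty -> Type :=
| tvar : forall G a, var G a -> tm A G a
| tcon : forall G (c : sym A), tm A G (styp A c)
| tlog : forall G (l : logc), tm A G (ltype l)
| tapp : forall G a b, tm A G (Tarr a b) -> tm A G a -> tm A G b
| tlam : forall G a b, tm A (a :: G) b -> tm A G (Tarr a b).

Arguments tvar {A G a}.
Arguments tcon {A G}.
Arguments tlog {A G}.
Arguments tapp {A G a b}.
Arguments tlam {A G a b}.

Definition closed (A : alphabet) (a : ty) := tm A [] a.
Definition sentence (A : alphabet) := tm A [] To.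

Fixpoint lift (A : alphabet) (N : Type) (sigN : N -> ty) G a (t : tm A G a)
  : tm (ext_alphabet A sigN) G a :=
  match t in tm _ G a return tm (ext_alphabet A sigN) G a with
  | tvar v => tvar v
  | tcon c => @tcon (ext_alphabet A sigN) _ (inl c)
  | tlog l => tlog l
  | tapp s u => tapp (lift sigN s) (lift sigN u)
  | tlam s => tlam (lift sigN s)
  end.

(** Henkin frames: D_o = bool (T/F), D_b arbitrary for base types, and D_{a->b}
    a set of functions D_a -> D_b, represented by an abstract carrier Dfun a b
    together with an injective ("extensional") application map into D_a -> D_b. *)
Definition Den_of (base : nat -> Type) (Dfun : ty -> ty -> Type) (t : ty) : Type :=
  match t with
  | To => bool
  | Tb n => base n
  | Tarr a b => Dfun a b
  end.

Record frame : Type := Frame {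
  base : nat -> Type;
  Dfun : ty -> ty -> Type;
  app : forall a b, Dfun a b -> Den_of base Dfun a -> Den_of base Dfun b;
  app_ext : forall a b (f g : Dfun a b), (forall x, app f x = app g x) -> f = g;
  dom_nonempty : forall t, inhabited (Den_of base Dfun t)
}.

Definition Den (F : frame) (t : ty) : Type := Den_of (base F) (Dfun F) t.

Definition appD (F : frame) (a b : ty) (f : Den F (Tarr a b)) (x : Den F a) : Den F b :=
  @app F a b f x.
Arguments appD {F a b} f x.

Fixpoint env (F : frame) (G : list ty) : Type :=
  match G with
  | [] => unit
  | a :: G' => (Den F a * env F G')%type
  end.

Fixpoint lookup (F : frame) G a (v : var G a) : env F G -> Den F a :=
  match v in var G a return env F G -> Den F a with
  | VZ _ _ => fun rho => fst rho
  | VS _ v' => fun rho => lookup F v' (snd rho)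
  end.

Definition is_eval (A : alphabet) (F : frame) (cval : forall c : sym A, Den F (styp A c))
  (ev : forall G a, tm A G a -> env F G -> Den F a) : Prop :=
  (forall G a (v : var G a) rho, ev G a (tvar v) rho = lookup F v rho) /\
  (forall G c rho, ev G _ (tcon c) rho = cval c) /\
  (forall G a rho (x y : Den F a),
      appD (appD (ev G _ (tlog (LEq a)) rho) x) y = true <-> x = y) /\
  (forall G rho (p : bool), appD (F:=F) (a:=To) (b:=To) (ev G _ (tlog LNeg) rho) p = negb p) /\
  (forall G rho (p q : bool),
      appD (F:=F) (a:=To) (b:=To)
        (appD (F:=F) (a:=To) (b:=Tarr To To) (ev G _ (tlog LOr) rho) p) q = orb p q) /\
  (forall G a rho (f : Den F (Tarr a To)),
      appD (ev G _ (tlog (LPi a)) rho) f = true <-> (forall x, appD f x = true)) /\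
  (forall G a b (s : tm A G (Tarr a b)) (u : tm A G a) rho,
      ev G b (tapp s u) rho = appD (ev G _ s rho) (ev G a u rho)) /\
  (forall G a b (s : tm A (a :: G) b) rho (x : Den F a),
      appD (ev G _ (tlam s) rho) x = ev (a :: G) b s (x, rho)).

Record interp (A : alphabet) : Type := Interp {
  ifr : frame;
  cval : forall c : sym A, Den ifr (styp A c);
  ev : forall G a, tm A G a -> env ifr G -> Den ifr a;
  ev_spec : @is_eval A ifr cval ev
}.

Definition V (A : alphabet) (I : interp A) a (t : closed A a) : Den (ifr I) a :=
  ev I t tt.

Definition is_model (A : alphabet) (I : interp A) (S : sentence A -> Prop) : Prop :=
  forall s, S s -> V I s = true.

Definition separating (A : alphabet) (I : interp A) : Prop :=
  forall a b (r s : closed A (Tarr a b)),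
    V I r <> V I s ->
    exists t : closed A a, V I (tapp r t) <> V I (tapp s t).

Definition separating_model (A : alphabet) (I : interp A) (S : sentence A -> Prop) : Prop :=
  separating I /\ is_model I S.

Definition lift_set (A : alphabet) (N : Type) (sigN : N -> ty) (S : sentence A -> Prop)
  : sentence (ext_alphabet A sigN) -> Prop :=
  fun s' => exists s, S s /\ s' = lift sigN s.
Arguments lift_set {A N} sigN S _.
Arguments lift {A N} sigN {G a} t.

(* Main.v *)
Require Import Defs.
From Stdlib Require Import List Classical Program.Equality.
Import ListNotations.
Set Implicit Arguments.

Fixpoint wk_app (M : list ty) K a (v : var K a) : var (K ++ M) a :=
  match v in var K a return var (K ++ M) a with
  | VZ a G => VZ a (G ++ M)
  | @VS _ b _ v' => VS b (wk_app M v')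
  end.

Fixpoint wk_pre (K : list ty) M a (v : var M a) : var (K ++ M) a :=
  match K return var (K ++ M) a with
  | [] => v
  | b :: K' => VS b (wk_pre K' v)
  end.

Definition lift_ren L L' (r : forall a, var L a -> var L' a) b
  : forall a, var (b :: L) a -> var (b :: L') a :=
  fun a v =>
  match v in var L0 a0 return
    (match L0 with [] => unit | b0 :: L1 => (forall a, var L1 a -> var L' a) -> var (b0 :: L') a0 end)
  with
  | VZ a G => fun _ => VZ a L'
  | @VS _ b G v' => fun r => VS b (r _ v')
  end r.

Fixpoint under (G : list ty) L L' (r : forall a, var L a -> var L' a)
  : forall a, var (G ++ L) a -> var (G ++ L') a :=
  match G return forall a, var (G ++ L) a -> var (G ++ L') a with
  | [] => r
  | b :: G' => @lift_ren _ _ (under G' r) b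
  end.

Fixpoint ren (A : alphabet) L a (t : tm A L a) : forall L', (forall a, var L a -> var L' a) -> tm A L' a :=
  match t in tm _ L a return forall L', (forall a, var L a -> var L' a) -> tm A L' a with
  | tvar v => fun L' r => tvar (r _ v)
  | tcon c => fun L' r => tcon c
  | tlog l => fun L' r => tlog l
  | tapp s u => fun L' r => tapp (ren s r) (ren u r)
  | tlam s => fun L' r => tlam (ren s (@lift_ren _ _ r _))
  end.

Fixpoint app_env (F : frame) (G K : list ty) : env F G -> env F K -> env F (G ++ K) :=
  match G return env F G -> env F K -> env F (G ++ K) with
  | [] => fun _ k => k
  | b :: G' => fun rho k => (fst rho, app_env F G' K (snd rho) k)
  end.

Lemma lookup_wk_app F M K a (v : var K a) (k : env F K) (m : env F M) :
  lookup F (wk_app M v) (app_env F K M k m) = lookup F v k.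
Proof. induction v; simpl; auto. Qed.

Lemma lookup_wk_pre F K M a (v : var M a) (k : env F K) (m : env F M) :
  lookup F (wk_pre K v) (app_env F K M k m) = lookup F v m.
Proof. induction K; simpl; auto. Qed.

Lemma lookup_lift_ren F L L' (r : forall a, var L a -> var L' a) b rho rho'
  (H : forall a (v : var L a), lookup F (r a v) rho' = lookup F v rho) (x : Den F b) :
  forall a (v : var (b :: L) a), lookup F (lift_ren r v) (x, rho') = lookup F v (x, rho).
Proof.
  intros a v. dependent destruction v; simpl; auto.
Qed.

Lemma lookup_under F G L L' (r : forall a, var L a -> var L' a) k k'
  (H : forall a (v : var L a), lookup F (r a v) k' = lookup F v k) :
  forall (rho : env F G) a (v : var (G ++ L) a),
    lookup F (under G r v) (app_env F G L' rho k') = lookup F v (app_env F G L rho k).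
Proof.
  induction G; simpl; intros; auto.
  destruct rho as [x rho]. simpl.
  apply (@lookup_lift_ren F (G ++ L) (G ++ L') (under G r) a
     (app_env F G L rho k) (app_env F G L' rho k')); auto.
Qed.

Lemma bool_iff_eq (b1 b2 : bool) (P : Prop) : (b1 = true <-> P) -> (b2 = true <-> P) -> b1 = b2.
Proof. destruct b1, b2; firstorder; symmetry; firstorder. Qed.

Lemma log_indep A (I : interp A) G G' (l : logc) (rho : env (ifr I) G) (rho' : env (ifr I) G') :
  ev I (tlog l) rho = ev I (tlog l) rho'.
Proof.
  destruct (ev_spec I) as (Hv & Hc & Heq & Hn & Ho & Hp & Ha & Hl).
  unfold appD in *.
  destruct l; simpl.
  - apply app_ext; intro x; apply app_ext; intro y.
    eapply bool_iff_eq; [apply Heq | apply Heq].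
  - apply app_ext; intro x. rewrite Hn, Hn. auto.
  - apply app_ext; intro x. apply app_ext; intro y. rewrite Ho, Ho. auto.
  - apply app_ext; intro f.
    eapply bool_iff_eq; [apply Hp | apply Hp].
Qed.

Lemma ren_ev A (I : interp A) L a (t : tm A L a) :
  forall L' (r : forall a, var L a -> var L' a) rho rho',
    (forall a (v : var L a), lookup _ (r a v) rho' = lookup _ v rho) ->
    ev I (ren t r) rho' = ev I t rho.
Proof.
  destruct (ev_spec I) as (Hv & Hc & Heq & Hn & Ho & Hp & Ha & Hl).
  induction t; intros; simpl.
  - rewrite !Hv. auto.
  - rewrite !Hc. auto.
  - apply log_indep.
  - rewrite !Ha. f_equal; eauto.
  - apply app_ext. intro x. change (appD (ev I (tlam (ren t (@lift_ren _ _ r _))) rho') x = appD (ev I (tlam t) rho) x).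
    rewrite !Hl. apply IHt. intros; apply lookup_lift_ren; auto.
Qed.

Definition NA (A : alphabet) (I : interp A) := ext_alphabet A (@projT1 ty (Den (ifr I))).

Fixpoint trans (A : alphabet) (I : interp A) G a (t : tm (NA I) G a)
  : {K : list ty & (tm A (G ++ K) a * env (ifr I) K)%type} :=
  match t in tm _ G a return {K : list ty & (tm A (G ++ K) a * env (ifr I) K)%type} with
  | @tvar _ G a v => existT _ [] (tvar (wk_app [] v), tt)
  | @tcon _ G c =>
      match c return {K : list ty & (tm A (G ++ K) (styp (NA I) c) * env (ifr I) K)%type} with
      | inl c => existT _ [] (tcon c, tt)
      | inr (existT _ b d) => existT _ [b] (tvar (wk_pre G (VZ b [])), (d, tt))
      end
  | @tlog _ G l => existT _ [] (tlog l, tt)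
  | @tapp _ G a b s u =>
      let (K1, p1) := trans s in
      let (K2, p2) := trans u in
      existT _ (K1 ++ K2)
        (tapp (ren (fst p1) (under G (fun a (v : var K1 a) => wk_app K2 v)))
              (ren (fst p2) (under G (fun a (v : var K2 a) => wk_pre K1 v))),
         app_env (ifr I) K1 K2 (snd p1) (snd p2))
  | @tlam _ G a b s =>
      let (K, p) := trans s in existT _ K (tlam (fst p), snd p)
  end.

Definition ev' (A : alphabet) (I : interp A) G a (t : tm (NA I) G a) (rho : env (ifr I) G) : Den (ifr I) a :=
  ev I (fst (projT2 (trans t))) (app_env (ifr I) G _ rho (snd (projT2 (trans t)))).

Definition cval' (A : alphabet) (I : interp A) (c : sym (NA I)) : Den (ifr I) (styp (NA I) c) :=
  match c return Den (ifr I) (styp (NA I) c) with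
  | inl c => cval I c
  | inr n => projT2 n
  end.

Lemma ev'_spec (A : alphabet) (I : interp A) : is_eval (ifr I) (@cval' A I) (@ev' A I).
Proof.
  destruct (ev_spec I) as (Hv & Hc & Heq & Hn & Ho & Hp & Ha & Hl).
  unfold ev'. repeat split; intros; simpl.
  - rewrite Hv. apply lookup_wk_app.
  - destruct c as [c | [b d]]; simpl.
    + apply Hc.
    + rewrite Hv. apply lookup_wk_pre.
  - simpl in H. apply Heq in H. auto.
  - apply Heq. auto.
  - apply Hn.
  - apply Ho.
  - simpl in H. exact (proj1 (Hp _ _ _ f) H x).
  - apply Hp. auto.
  - destruct (trans s) as [K1 [u1 k1]]. destruct (trans u) as [K2 [u2 k2]]. simpl.
    rewrite Ha. f_equal; apply ren_ev; intros; apply lookup_under; intros;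
      [apply lookup_wk_app | apply lookup_wk_pre].
  - destruct (trans s) as [K [u k]]. simpl. rewrite Hl. reflexivity.
Qed.

Definition I' (A : alphabet) (I : interp A) : interp (NA I) :=
  Interp (@ev'_spec A I).

Lemma lift_ok (A : alphabet) (I : interp A) G a (t : tm A G a) :
  forall rho, ev (I' I) (lift _ t) rho = ev I t rho.
Proof.
  destruct (ev_spec I) as (Hv & Hc & Heq & Hn & Ho & Hp & Ha & Hl).
  destruct (ev_spec (I' I)) as (Hv' & Hc' & Heq' & Hn' & Ho' & Hp' & Ha' & Hl').
  induction t; intros; cbn [lift].
  - rewrite Hv, Hv'. auto.
  - rewrite Hc. exact (Hc' _ (inl c) rho).
  - simpl. unfold ev'. simpl. apply log_indep.
  - rewrite Ha, Ha'. rewrite IHt1, IHt2. auto.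
  - apply app_ext. intro x. unfold appD in *. rewrite Hl, Hl'. apply IHt.
Qed.

Theorem mainTheorem17 (A : alphabet) (S : sentence A -> Prop) :
  (exists I : interp A, is_model I S) ->
  exists (N : Type) (sigN : N -> ty) (I' : interp (ext_alphabet A sigN)),
    separating_model I' (lift_set sigN S).
Proof.
  intros [I HI].
  exists {t : ty & Den (ifr I) t}, (@projT1 ty (Den (ifr I))), (I' I).
  split.
  - intros a b r s Hrs.
    destruct (ev_spec (I' I)) as (Hv & Hc & Heq & Hn & Ho & Hp & Ha & Hl).
    destruct (classic (exists x, appD (V (I' I) r) x <> appD (V (I' I) s) x)) as [[x Hx] | Hno].
    + pose (t := @tcon (NA I) [] (inr (existT _ a x))).
      assert (E : ev (I' I) t tt = x) by exact (Hc [] (inr (existT _ a x)) tt).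
      assert (E2 : forall u : closed (NA I) (Tarr a b), V (I' I) (tapp u t) = appD (V (I' I) u) x).
      { intros u. unfold V. rewrite Ha. exact (f_equal (appD (ev (I' I) u tt)) E). }
      exists t. rewrite !E2. exact Hx.
    + exfalso. apply Hrs. apply app_ext. intro x.
      destruct (classic (appD (V (I' I) r) x = appD (V (I' I) s) x)); auto.
      exfalso; apply Hno; eauto.
  - intros s' [s [Hs ->]]. unfold V. etransitivity; [exact (lift_ok I s tt) | exact (HI s Hs)].
Qed.
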